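(* Let $X=(X_1,X_2)$ be a nonnegative bivariate random vector with absolutely continuous distribution function $F$ supported in $(0,b_1)\times(0,b_2)$, $0<b_i<\infty$, with finite $\overline\varepsilon^*_i(X;t_1,t_2)$. Then there exist functions $c_1(\cdot),c_2(\cdot)$ with values in $(0,1)$ such that $$\overline\varepsilon^*_i(X;t_1,t_2)=c_i(t_j)\,m_i^X(t_1,t_2),\qquad i,j\in\{1,2\},\ i\ne j,$$ for all $(t_1,t_2)\in(0,b_1)\times(0,b_2)$ (so $c_i$ depends on $t_j$ only, not on $t_i$), if and only if $F$ is the bivariate power distribution $$F(t_1,t_2)=\left(\frac{t_1}{b_1}\right)^{c_1}\left(\frac{t_2}{b_2}\right)^{c_2+\theta\log(t_1/b_1)},\qquad 0<t_i<b_i,$$ for some $\theta\le0$ and constants $c_1,c_2>0$; in this case $c_i=\dfrac{c_i(b_j)}{1-c_i(b_j)}$.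
   Context: Let $F(x_1,x_2)=P(X_1\le x_1,X_2\le x_2)$. For $t_1,t_2>0$ with $F(t_1,t_2)>0$ define the conditional dynamic cumulative past entropies (CDCPE) $$\overline\varepsilon^*_1(X;t_1,t_2)=-\int_0^{t_1}\frac{F(x_1,t_2)}{F(t_1,t_2)}\log\frac{F(x_1,t_2)}{F(t_1,t_2)}dx_1,\qquad \overline\varepsilon^*_2(X;t_1,t_2)=-\int_0^{t_2}\frac{F(t_1,x_2)}{F(t_1,t_2)}\log\frac{F(t_1,x_2)}{F(t_1,t_2)}dx_2,$$ and the components of the bivariate expected inactivity time $m_1^X(t_1,t_2)=\frac{1}{F(t_1,t_2)}\int_0^{t_1}F(x_1,t_2)dx_1$, $m_2^X(t_1,t_2)=\frac{1}{F(t_1,t_2)}\int_0^{t_2}F(t_1,x_2)dx_2$. The values $c_i(b_j)$ are understood as the limits of $c_i(t_j)$ as $t_j\to b_j$. *)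

(* Defs.v *)
From Stdlib Require Import Reals Lra List ClassicalEpsilon.
Open Scope R_scope.

(* Total Riemann integral: the Riemann integral of f over [a,b] if f is
   Riemann integrable there, and 0 otherwise (value is independent of the
   chosen integrability proof, RiemannInt_P5). *)
Definition RInt (f : R -> R) (a b : R) : R :=
  match excluded_middle_informative (inhabited (Riemann_integrable f a b)) with
  | left H => RiemannInt (epsilon H (fun _ => True))
  | right _ => 0
  end.

(* F-volume of the rectangle (a1,c1] x (a2,c2]. *)
Definition rvol (F : R -> R -> R) (r : R * R * R * R) : R :=
  let '(a1, c1, a2, c2) := r in F c1 c2 - F a1 c2 - F c1 a2 + F a1 a2.

Definition rarea (r : R * R * R * R) : R :=
  let '(a1, c1, a2, c2) := r in (c1 - a1) * (c2 - a2).

Definition rect_ok (r : R * R * R * R) : Prop :=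
  let '(a1, c1, a2, c2) := r in a1 <= c1 /\ a2 <= c2.

Definition rect_disj (r r' : R * R * R * R) : Prop :=
  let '(a1, c1, a2, c2) := r in
  let '(a1', c1', a2', c2') := r' in
  c1 <= a1' \/ c1' <= a1 \/ c2 <= a2' \/ c2' <= a2.

Definition sumR (l : list R) : R := fold_right Rplus 0 l.

(* F is the joint distribution function P(X1<=x1, X2<=x2) of a random vector
   with values in [0,b1] x [0,b2] (nonnegative, supported in (0,b1)x(0,b2)). *)
Definition biv_cdf_on (F : R -> R -> R) (b1 b2 : R) : Prop :=
  (forall a1 c1 a2 c2, a1 <= c1 -> a2 <= c2 -> 0 <= rvol F (a1, c1, a2, c2)) /\
  (forall x1 x2, x1 <= 0 \/ x2 <= 0 -> F x1 x2 = 0) /\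
  (forall x1 x2, F x1 x2 = F (Rmin x1 b1) (Rmin x2 b2)) /\
  F b1 b2 = 1.

(* Absolute continuity of the distribution (w.r.t. Lebesgue measure on R^2),
   in the epsilon-delta form over finite families of non-overlapping
   rectangles (equivalent to mu_F << Lebesgue for a finite measure). *)
Definition biv_abs_cont (F : R -> R -> R) : Prop :=
  forall eps, 0 < eps -> exists delta, 0 < delta /\
    forall rs : list (R * R * R * R),
      Forall rect_ok rs -> ForallOrdPairs rect_disj rs ->
      sumR (map rarea rs) < delta ->
      sumR (map (rvol F) rs) < eps.

Definition cdcpe1 (F : R -> R -> R) (t1 t2 : R) : R :=
  - RInt (fun x1 => F x1 t2 / F t1 t2 * ln (F x1 t2 / F t1 t2)) 0 t1.

Definition cdcpe2 (F : R -> R -> R) (t1 t2 : R) : R :=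
  - RInt (fun x2 => F t1 x2 / F t1 t2 * ln (F t1 x2 / F t1 t2)) 0 t2.

Definition mit1 (F : R -> R -> R) (t1 t2 : R) : R :=
  RInt (fun x1 => F x1 t2) 0 t1 / F t1 t2.

Definition mit2 (F : R -> R -> R) (t1 t2 : R) : R :=
  RInt (fun x2 => F t1 x2) 0 t2 / F t1 t2.

Definition cdcpe_prop (F : R -> R -> R) (b1 b2 : R) (cf1 cf2 : R -> R) : Prop :=
  (forall t, 0 < t < b2 -> 0 < cf1 t < 1) /\
  (forall t, 0 < t < b1 -> 0 < cf2 t < 1) /\
  (forall t1 t2, 0 < t1 < b1 -> 0 < t2 < b2 ->
     cdcpe1 F t1 t2 = cf1 t2 * mit1 F t1 t2 /\
     cdcpe2 F t1 t2 = cf2 t1 * mit2 F t1 t2).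

Definition biv_power (F : R -> R -> R) (b1 b2 theta c1 c2 : R) : Prop :=
  theta <= 0 /\ 0 < c1 /\ 0 < c2 /\
  (forall t1 t2, 0 < t1 < b1 -> 0 < t2 < b2 ->
     F t1 t2 = Rpower (t1 / b1) c1 * Rpower (t2 / b2) (c2 + theta * ln (t1 / b1))).

(* Main.v *)
Require Import Defs.
From Stdlib Require Import Reals Lra ClassicalEpsilon.
From Coquelicot Require Import Coquelicot.
Open Scope R_scope.

Lemma RInt_link (f : R -> R) a b : ex_RInt f a b -> Defs.RInt f a b = RInt f a b.
Proof.
  intros H. unfold Defs.RInt.
  destruct (excluded_middle_informative _) as [H1|H1].
  - rewrite (RInt_Reals f a b (epsilon H1 (fun _ => True))). reflexivity.
  - exfalso. apply H1. constructor. now apply ex_RInt_Reals_0.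
Qed.

Lemma cont_of_eps (f : R -> R) x :
  (forall eps, 0 < eps -> exists d, 0 < d /\ forall z, Rabs (z - x) < d -> Rabs (f z - f x) < eps) ->
  continuous f x.
Proof.
  intros H. apply continuity_pt_filterlim.
  intros eps Heps. destruct (H eps Heps) as [d [Hd Hz]].
  exists d. split; auto. intros z [_ Hzx]. apply Hz. exact Hzx.
Qed.

Lemma eps_of_cont (f : R -> R) x : continuous f x ->
  forall eps, 0 < eps -> exists d, 0 < d /\ forall z, Rabs (z - x) < d -> Rabs (f z - f x) < eps.
Proof.
  intros H. apply continuity_pt_filterlim in H.
  intros eps Heps. destruct (H eps Heps) as [d [Hd Hz]].
  exists d. split; auto. intros z Hzx.
  destruct (Req_dec z x) as [->|Hne].
  - rewrite Rminus_diag, Rabs_R0. lra.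
  - apply Hz. split; [split; [exact I| auto]| exact Hzx].
Qed.

Lemma ln_lt_id x : 0 < x -> ln x < x.
Proof. intros Hx. pose proof (exp_ineq1_le (ln x)). rewrite exp_ln in H; lra. Qed.

Lemma ln_nonpos x : x <= 0 -> ln x = 0.
Proof. intros H. unfold ln. destruct (Rlt_dec 0 x); [exfalso; lra|reflexivity]. Qed.

Lemma phi_cont y : continuous (fun y => y * ln y) y.
Proof.
  destruct (Rlt_or_le 0 y) as [Hy|Hy].
  - apply (@ex_derive_continuous R_AbsRing R_NormedModule). auto_derive. lra.
  - destruct (Rlt_or_le y 0) as [Hy'|Hy'].
    + apply cont_of_eps. intros eps Heps. exists (-y). split; [lra|].
      intros z Hz. apply Rabs_def2 in Hz. simpl.
      rewrite (ln_nonpos z), (ln_nonpos y) by lra.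
      rewrite !Rmult_0_r, Rminus_diag, Rabs_R0. lra.
    + assert (y = 0) by lra. subst y.
      apply cont_of_eps. intros eps Heps.
      exists (Rmin 1 (eps*eps/4)). split.
      { apply Rmin_pos; [lra| nra]. }
      intros z Hz. rewrite Rminus_0_r in Hz.
      simpl. rewrite (ln_nonpos 0) by lra.
      rewrite Rmult_0_r, Rminus_0_r.
      destruct (Rlt_or_le 0 z) as [hz|hz].
      2:{ rewrite (ln_nonpos z) by lra. rewrite Rmult_0_r, Rabs_R0. lra. }
      assert (Hz1 : z < 1) by (apply Rabs_def2 in Hz; pose proof (Rmin_l 1 (eps*eps/4)); lra).
      assert (Hz2 : z < eps*eps/4) by (apply Rabs_def2 in Hz; pose proof (Rmin_r 1 (eps*eps/4)); lra).
      assert (Hs : 0 < sqrt z) by (apply sqrt_lt_R0; lra).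
      assert (Hsz : sqrt z * sqrt z = z) by (apply sqrt_sqrt; lra).
      assert (Hl : ln z < 0).
      { rewrite <- ln_1. apply ln_increasing; lra. }
      assert (Hl2 : - ln z < 2 / sqrt z).
      { assert (ln z = - 2 * ln (/ sqrt z)).
        { rewrite ln_Rinv by lra. rewrite <- Hsz at 1. rewrite ln_mult by lra. ring. }
        rewrite H. pose proof (ln_lt_id (/ sqrt z) ltac:(apply Rinv_0_lt_compat; lra)).
        unfold Rdiv. lra. }
      rewrite Rabs_left by nra.
      assert (Hsq : sqrt z < eps / 2).
      { apply Rsqr_incrst_0; unfold Rsqr; try lra. }
      assert (- (z * ln z) < 2 * sqrt z).
      { replace (- (z * ln z)) with (z * (- ln z)) by ring.
        apply Rlt_le_trans with (z * (2 / sqrt z)).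
        - apply Rmult_lt_compat_l; lra.
        - right. rewrite <- Hsz at 1. field. lra. }
      lra.
Qed.

Lemma RInt_deriv (g : R -> R) : (forall x, continuous g x) ->
  forall x, is_derive (fun t => RInt g 0 t) x (g x).
Proof.
  intros Hg x. apply (is_derive_RInt g (fun t => RInt g 0 t) 0 x).
  - apply filter_forall. intros b0. apply (RInt_correct g 0 b0).
    apply ex_RInt_continuous. intros; apply Hg.
  - apply Hg.
Qed.

Lemma RInt_cont (g : R -> R) : (forall x, continuous g x) ->
  forall x, continuous (fun t => RInt g 0 t) x.
Proof.
  intros Hg x. apply (@ex_derive_continuous R_AbsRing R_NormedModule).
  eexists. apply RInt_deriv; auto.
Qed.

Lemma D1 (f : R -> R) a b k : a <= b ->
  (forall x, a < x < b -> is_derive f x k) ->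
  (forall x, a <= x <= b -> continuous f x) -> f b - f a = k * (b - a).
Proof.
  intros Hab Hd Hc.
  assert (H1 : forall x, Rmin a b < x < Rmax a b -> is_derive f x k).
  { rewrite Rmin_left, Rmax_right by lra. auto. }
  assert (H2 : forall x, Rmin a b <= x <= Rmax a b -> continuity_pt f x).
  { rewrite Rmin_left, Rmax_right by lra. intros x Hx. apply continuity_pt_filterlim. exact (Hc x Hx). }
  destruct (MVT_gen f a b (fun _ => k) H1 H2) as [c [_ Hc2]].
  exact Hc2.
Qed.

Lemma D2 (f : R -> R) a b k :
  (forall x, a < x < b -> is_derive f x k) ->
  forall x y, a < x < b -> a < y < b -> f y - f x = k * (y - x).
Proof.
  intros Hd x y Hx Hy.
  assert (Hc : forall z, a < z < b -> continuous f z).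
  { intros z Hz. apply (@ex_derive_continuous R_AbsRing R_NormedModule). eexists. apply Hd; auto. }
  destruct (Rle_or_lt x y).
  - apply D1; auto. intros; apply Hd; lra. intros; apply Hc; lra.
  - assert (f x - f y = k * (x - y)). { apply D1; [lra| |]. intros; apply Hd; lra. intros; apply Hc; lra. }
    lra.
Qed.

Lemma FTC_open (g P : R -> R) t : (forall x, continuous g x) -> 0 < t ->
  (forall x, 0 <= x <= t -> continuous P x) ->
  (forall x, 0 < x < t -> is_derive P x (g x)) ->
  RInt g 0 t = P t - P 0.
Proof.
  intros Hg Ht Hc Hd.
  assert (H := D1 (fun x => RInt g 0 x - P x) 0 t 0 ltac:(lra)).
  simpl in H. rewrite RInt_point in H. unfold zero in H; simpl in H.
  enough (RInt g 0 t - P t - (0 - P 0) = 0 * (t - 0)) by lra.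
  apply H.
  - intros x Hx.
    pose proof (is_derive_minus _ _ x _ _ (RInt_deriv g Hg x) (Hd x Hx)) as K.
    assert (K2 : is_derive (fun x => RInt g 0 x - P x) x (g x - g x)) by exact K.
    rewrite Rminus_diag in K2. exact K2.
  - intros x Hx. apply (continuous_minus (fun x => RInt g 0 x) P). apply RInt_cont; auto. auto.
Qed.

Lemma cont_mul (f g : R -> R) x : continuous f x -> continuous g x -> continuous (fun y => f y * g y) x.
Proof. intros Hf Hg. exact (continuous_mult f g x Hf Hg). Qed.
Lemma cont_minus (f g : R -> R) x : continuous f x -> continuous g x -> continuous (fun y => f y - g y) x.
Proof. intros Hf Hg. exact (continuous_minus f g x Hf Hg). Qed.
Lemma cont_const (c : R) (x : R) : continuous (fun _ : R => c) x.
Proof. apply continuous_const. Qed.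
Lemma cont_id x : continuous (fun y : R => y) x.
Proof. apply continuous_id. Qed.

Lemma exR (f : R -> R) a b : (forall x, continuous f x) -> ex_RInt f a b.
Proof. intros H. apply (@ex_RInt_continuous R_CompleteNormedModule). intros; apply H. Qed.

Lemma exp_div x y : exp x / exp y = exp (x - y).
Proof.
  assert (H: exp (x - y) * exp y = exp x) by (rewrite <- exp_plus; f_equal; ring).
  rewrite <- H. field. apply Rgt_not_eq, exp_pos.
Qed.

Lemma loc_int (P : R -> Prop) x a b : a < x < b -> (forall y, a < y < b -> P y) -> locally x P.
Proof.
  intros Hx HP. apply (locally_interval P x a b); simpl; try lra.
  intros y H1 H2; apply HP; simpl in *; lra.
Qed.

Lemma L3 (G : R -> R) (B alpha a t : R) : 0 < a -> (forall x, continuous G x) -> G 0 = 0 ->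
  (forall x, 0 < x < B -> G x = exp (alpha + a * ln x)) -> 0 < t < B ->
  0 < Defs.RInt G 0 t / G t /\
  - Defs.RInt (fun x => G x / G t * ln (G x / G t)) 0 t = a / (a + 1) * (Defs.RInt G 0 t / G t).
Proof.
  intros Ha Hc HG0 HG Ht.
  assert (Gt : 0 < G t) by (rewrite HG by lra; apply exp_pos).
  assert (Hhc : forall x, continuous (fun x => G x / G t * ln (G x / G t)) x).
  { intros x. apply (continuous_comp (fun x => G x / G t) (fun y => y * ln y)).
    - unfold Rdiv. apply cont_mul; [apply Hc|apply cont_const].
    - apply phi_cont. }
  rewrite !RInt_link by (apply exR; auto).
  assert (I1 : RInt G 0 t = t * G t / (a + 1) - 0 * G 0 / (a + 1)).
  { apply (FTC_open G (fun x => x * G x / (a + 1))); [auto|lra| |].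
    - intros x _. unfold Rdiv. apply cont_mul; [apply cont_mul; [apply cont_id|apply Hc]|apply cont_const].
    - intros x Hx.
      apply (is_derive_ext_loc (fun y => y * exp (alpha + a * ln y) / (a + 1))).
      { apply (loc_int _ x 0 B); [lra|]. intros y Hy. rewrite HG; auto. }
      auto_derive; [lra|]. rewrite (HG x) by lra. field. lra. }
  assert (I2 : RInt (fun x => G x / G t * ln (G x / G t)) 0 t =
    (t / (a+1) * (G t / G t * ln (G t / G t)) - a * t * (G t / G t) / ((a+1)*(a+1)))
    - (0 / (a+1) * (G 0 / G t * ln (G 0 / G t)) - a * 0 * (G 0 / G t) / ((a+1)*(a+1)))).
  { apply (FTC_open _ (fun x => x / (a+1) * (G x / G t * ln (G x / G t)) - a * x * (G x / G t) / ((a+1)*(a+1)))); [auto|lra| |].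
    - intros x _. apply cont_minus.
      + apply cont_mul; [|apply Hhc]. unfold Rdiv. apply cont_mul; [apply cont_id|apply cont_const].
      + unfold Rdiv. apply cont_mul; [|apply cont_const]. apply cont_mul; [|apply cont_mul; [apply Hc|apply cont_const]].
        apply cont_mul; [apply cont_const|apply cont_id].
    - intros x Hx.
      assert (Er : forall y, 0 < y < B -> G y / G t = exp (a * (ln y - ln t))).
      { intros y Hy. rewrite !HG by lra. rewrite exp_div. f_equal. ring. }
      apply (is_derive_ext_loc (fun y => y / (a+1) * (exp (a * (ln y - ln t)) * (a * (ln y - ln t)))
              - a * y * exp (a * (ln y - ln t)) / ((a+1)*(a+1)))).
      { apply (loc_int _ x 0 B); [lra|]. intros y Hy. rewrite Er by lra. rewrite ln_exp. reflexivity. }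
      auto_derive; [lra|]. rewrite Er by lra. rewrite ln_exp. unfold Rminus. field. lra. }
  rewrite I1, I2. rewrite HG0. unfold Rdiv. rewrite Rinv_r by lra. rewrite ln_1.
  split.
  - apply Rmult_lt_0_compat; [|apply Rinv_0_lt_compat; lra].
    rewrite Rmult_0_l, Rmult_0_l, Rminus_0_r. apply Rmult_lt_0_compat; [nra|apply Rinv_0_lt_compat; lra].
  - field. lra.
Qed.

Lemma small_eq x : (forall eta, 0 < eta -> Rabs x < eta) -> x = 0.
Proof.
  intros H. destruct (Req_dec x 0) as [|Hn]; auto.
  exfalso. specialize (H (Rabs x / 2)). assert (0 < Rabs x) by (apply Rabs_pos_lt; auto).
  specialize (H ltac:(lra)). lra.
Qed.

Lemma L1 (G : R -> R) (B c : R) : 0 < B -> 0 < c < 1 -> (forall x, continuous G x) -> G 0 = 0 ->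
  (forall x, 0 < x < B -> 0 < G x) ->
  (forall t, 0 < t < B -> - Defs.RInt (fun x => G x / G t * ln (G x / G t)) 0 t = c * (Defs.RInt G 0 t / G t)) ->
  exists alpha, forall t, 0 < t < B -> ln (G t) = alpha + c / (1 - c) * ln t.
Proof.
  intros HB Hc HGc HG0 HGp Heq.
  set (H := (fun t => RInt G 0 t) : R -> R).
  set (K := (fun t => RInt (fun x => G x * ln (G x)) 0 t) : R -> R).
  assert (Hc2 : forall x, continuous (fun x => G x * ln (G x)) x).
  { intros x. apply (continuous_comp G (fun y => y * ln y)); [apply HGc| apply phi_cont]. }
  assert (dH : forall x, is_derive H x (G x)) by (apply RInt_deriv; auto).
  assert (dK : forall x, is_derive K x (G x * ln (G x))) by (apply (RInt_deriv (fun x => G x * ln (G x))); auto).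
  assert (Hpos : forall t, 0 < t < B -> 0 < H t).
  { intros t Ht. apply RInt_gt_0; [lra| |]. intros; apply HGp; lra. intros; apply HGc. }
  assert (E1 : forall t, 0 < t < B -> ln (G t) = c + K t / H t).
  { intros t Ht. specialize (Heq t Ht).
    assert (Gt : 0 < G t) by auto.
    rewrite !RInt_link in Heq.
    2: apply exR; auto.
    2:{ apply exR. intros x. apply (continuous_comp (fun x => G x / G t) (fun y => y * ln y)); [|apply phi_cont].
        apply (continuous_mult G (fun _ => / G t)); [apply HGc|apply continuous_const]. }
    assert (Hi : is_RInt (fun x => G x / G t * ln (G x / G t)) 0 t (/ G t * K t - ln (G t) / G t * H t)).
    { apply (is_RInt_ext (fun x => minus (scal (/ G t) (G x * ln (G x))) (scal (ln (G t) / G t) (G x)))).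
      - rewrite Rmin_left, Rmax_right by lra. intros x Hx.
        assert (0 < G x) by (apply HGp; lra).
        rewrite ln_div by lra. unfold minus, plus, opp, scal; simpl; unfold mult; simpl. field. lra.
      - apply (is_RInt_minus (V := R_NormedModule)); apply (is_RInt_scal (V := R_NormedModule)); apply (RInt_correct (V := R_CompleteNormedModule)); apply exR; auto. }
    apply (is_RInt_unique (V := R_CompleteNormedModule)) in Hi. rewrite Hi in Heq. fold H in Heq.
    assert (Ht' := Hpos t Ht).
    assert (ln (G t) * H t - K t = c * H t).
    { replace (ln (G t) * H t - K t) with (G t * (- (/ G t * K t - ln (G t) / G t * H t))) by (field; lra).
      rewrite Heq. unfold H. field. lra. }
    apply (Rmult_eq_reg_r (H t)); [|lra]. rewrite Rmult_plus_distr_r.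
    replace (K t / H t * H t) with (K t) by (field; lra). lra. }
  assert (P1 : forall t, 0 < t < B -> is_derive (fun t => K t / H t - c * ln (H t)) t 0).
  { intros t Ht. assert (Ht' := Hpos t Ht).
    auto_derive.
    - repeat split; try (eexists; eauto); lra.
    - replace (Derive (fun x => K x) t) with (G t * ln (G t)) by (symmetry; apply is_derive_unique; exact (dK t)).
      replace (Derive (fun x => H x) t) with (G t) by (symmetry; apply is_derive_unique; exact (dH t)).
      rewrite E1 by auto. field. lra. }
  assert (C1 := D2 _ 0 B 0 P1).
  set (d := c + (K (B/2) / H (B/2) - c * ln (H (B/2)))).
  assert (E2 : forall t, 0 < t < B -> ln (G t) = d + c * ln (H t)).
  { intros t Ht. specialize (C1 (B/2) t ltac:(lra) Ht). rewrite E1 by auto. unfold d. lra. }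
  set (kap := (1 - c) * exp d).
  assert (P2 : forall t, 0 < t < B -> is_derive (fun t => exp ((1 - c) * ln (H t))) t kap).
  { intros t Ht. assert (Ht' := Hpos t Ht).
    auto_derive.
    - repeat split; try (eexists; eauto); lra.
    - replace (Derive (fun x => H x) t) with (G t) by (symmetry; apply is_derive_unique; exact (dH t)).
      assert (Gt : G t = exp (d + c * ln (H t))) by (rewrite <- E2 by auto; rewrite exp_ln; auto).
      rewrite Gt. unfold kap.
      assert (Ex : exp ((1 - c) * ln (H t)) * exp (d + c * ln (H t)) = exp d * H t).
      { rewrite <- exp_plus. replace ((1 - c) * ln (H t) + (d + c * ln (H t))) with (d + ln (H t)) by ring.
        rewrite exp_plus, exp_ln; auto. }
      replace (exp ((1 - c) * ln (H t)) * (1 * ((1 - c) * (1 * exp (d + c * ln (H t)) / H t))))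
        with ((1-c) * (exp ((1 - c) * ln (H t)) * exp (d + c * ln (H t))) / H t) by (field; lra).
      transitivity ((1-c) * (exp ((1 - c) * ln (H t)) * exp (d + c * ln (H t))) / H t); [field; lra|].
      rewrite Ex. field. lra. }
  assert (C2 := D2 _ 0 B kap P2).
  assert (Hkap : 0 < kap) by (unfold kap; apply Rmult_lt_0_compat; [lra|apply exp_pos]).
  assert (H0 : H 0 = 0) by (unfold H; rewrite RInt_point; reflexivity).
  assert (E3 : forall t, 0 < t < B -> exp ((1 - c) * ln (H t)) = kap * t).
  { intros t Ht.
    enough (exp ((1 - c) * ln (H t)) - kap * t = 0) by lra.
    apply small_eq. intros eta Heta.
    assert (Hc0 := eps_of_cont H 0 (RInt_cont G HGc 0)).
    set (ep := exp (ln eta / (1 - c))).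
    destruct (Hc0 ep (exp_pos _)) as [del [Hdel Hdel2]].
    set (s := Rmin (Rmin (del/2) (t/2)) (eta / (kap + 1))).
    assert (Hs1 : s <= del/2) by (unfold s; pose proof (Rmin_l (Rmin (del/2) (t/2)) (eta / (kap + 1))); pose proof (Rmin_l (del/2) (t/2)); lra).
    assert (Hs2 : s <= t/2) by (unfold s; pose proof (Rmin_l (Rmin (del/2) (t/2)) (eta / (kap + 1))); pose proof (Rmin_r (del/2) (t/2)); lra).
    assert (Hs3 : s <= eta / (kap + 1)) by (unfold s; apply Rmin_r).
    assert (Hs0 : 0 < s).
    { unfold s. apply Rmin_pos; [apply Rmin_pos; lra|]. apply Rdiv_lt_0_compat; lra. }
    assert (Hks : kap * s < eta).
    { apply Rle_lt_trans with (kap * (eta / (kap + 1))). apply Rmult_le_compat_l; lra.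
      apply (Rmult_lt_reg_r (kap + 1)); [lra|]. replace (kap * (eta / (kap + 1)) * (kap + 1)) with (kap * eta) by (field; lra). nra. }
    assert (Hsp : 0 < H s) by (apply Hpos; lra).
    assert (Hss : H s < ep).
    { specialize (Hdel2 s ltac:(rewrite Rminus_0_r, Rabs_pos_eq; lra)). rewrite H0, Rminus_0_r, Rabs_pos_eq in Hdel2; lra. }
    assert (Hps : exp ((1 - c) * ln (H s)) < eta).
    { rewrite <- (exp_ln eta) by lra. apply exp_increasing.
      assert (ln (H s) < ln eta / (1 - c)).
      { rewrite <- (ln_exp (ln eta / (1 - c))). apply ln_increasing; auto. }
      apply (Rmult_lt_compat_l (1 - c)) in H1; [|lra].
      replace ((1 - c) * (ln eta / (1 - c))) with (ln eta) in H1 by (field; lra). lra. }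
    specialize (C2 s t ltac:(lra) Ht).
    assert (0 < exp ((1 - c) * ln (H s))) by apply exp_pos.
    replace (exp ((1 - c) * ln (H t)) - kap * t) with (exp ((1 - c) * ln (H s)) - kap * s) by lra.
    apply Rabs_def1; nra. }
  exists (d + c / (1 - c) * ln kap).
  intros t Ht. rewrite E2 by auto.
  assert (Hl : (1 - c) * ln (H t) = ln kap + ln t).
  { rewrite <- ln_mult by lra. rewrite <- E3 by auto. rewrite ln_exp. reflexivity. }
  replace (ln (H t)) with ((ln kap + ln t) / (1 - c)) by (rewrite <- Hl; field; lra).
  field. lra.
Qed.

Lemma AC_one F : biv_abs_cont F -> forall eps, 0 < eps -> exists del, 0 < del /\
  forall a1 c1 a2 c2, a1 <= c1 -> a2 <= c2 -> (c1 - a1) * (c2 - a2) < del ->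
  rvol F (a1, c1, a2, c2) < eps.
Proof.
  intros HAC eps Heps. destruct (HAC eps Heps) as [del [Hd Hr]]. exists del; split; auto.
  intros a1 c1 a2 c2 H1 H2 H3.
  specialize (Hr (cons (a1, c1, a2, c2) nil)).
  simpl in Hr. rewrite !Rplus_0_r in Hr. apply Hr; auto.
  - constructor; [simpl; auto|constructor].
  - constructor; constructor.
Qed.

Lemma rvol_eq F a1 c1 a2 c2 : rvol F (a1, c1, a2, c2) = F c1 c2 - F a1 c2 - F c1 a2 + F a1 a2.
Proof. reflexivity. Qed.

Lemma Cont1 F b1 b2 : biv_cdf_on F b1 b2 -> biv_abs_cont F ->
  forall t, 0 <= t -> forall x, continuous (fun x => F x t) x.
Proof.
  intros [Hv [H0 _]] HAC t Ht x. apply cont_of_eps. intros eps Heps.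
  destruct (AC_one F HAC eps Heps) as [del [Hd Hr]].
  exists (del / (t + 1)). split; [apply Rdiv_lt_0_compat; lra|].
  intros z Hz.
  assert (Hz0 : F z 0 = 0) by (apply H0; lra). assert (Hx0 : F x 0 = 0) by (apply H0; lra).
  assert (Harea : forall u, 0 <= u < del / (t+1) -> u * (t - 0) < del).
  { intros u Hu. apply Rle_lt_trans with (u * (t + 1)); [apply Rmult_le_compat_l; lra|].
    destruct Hu as [_ Hu]. apply (Rmult_lt_compat_r (t+1)) in Hu; [|lra]. replace (del / (t + 1) * (t + 1)) with del in Hu by (field; lra). lra. }
  destruct (Rle_or_lt z x).
  - assert (A := Hr z x 0 t H ltac:(lra) ltac:(apply Harea; apply Rabs_def2 in Hz; lra)).
    assert (B := Hv z x 0 t H ltac:(lra)).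
    rewrite rvol_eq in A, B. rewrite Hz0, Hx0 in A, B.
    rewrite Rabs_left1 by lra. lra.
  - assert (A := Hr x z 0 t ltac:(lra) ltac:(lra) ltac:(apply Harea; apply Rabs_def2 in Hz; lra)).
    assert (B := Hv x z 0 t ltac:(lra) ltac:(lra)).
    rewrite rvol_eq in A, B. rewrite Hz0, Hx0 in A, B.
    rewrite Rabs_pos_eq by lra. lra.
Qed.

Lemma Cont2 F b1 b2 : biv_cdf_on F b1 b2 -> biv_abs_cont F ->
  forall s, 0 <= s -> forall y, continuous (fun y => F s y) y.
Proof.
  intros [Hv [H0 _]] HAC t Ht x. apply cont_of_eps. intros eps Heps.
  destruct (AC_one F HAC eps Heps) as [del [Hd Hr]].
  exists (del / (t + 1)). split; [apply Rdiv_lt_0_compat; lra|].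
  intros z Hz.
  assert (Hz0 : F 0 z = 0) by (apply H0; lra). assert (Hx0 : F 0 x = 0) by (apply H0; lra).
  assert (Harea : forall u, 0 <= u < del / (t+1) -> (t - 0) * u < del).
  { intros u Hu. apply Rle_lt_trans with (u * (t + 1)); [nra|].
    destruct Hu as [_ Hu]. apply (Rmult_lt_compat_r (t+1)) in Hu; [|lra]. replace (del / (t + 1) * (t + 1)) with del in Hu by (field; lra). lra. }
  destruct (Rle_or_lt z x).
  - assert (A := Hr 0 t z x ltac:(lra) H ltac:(apply Harea; apply Rabs_def2 in Hz; lra)).
    assert (B := Hv 0 t z x ltac:(lra) H).
    rewrite rvol_eq in A, B. rewrite Hz0, Hx0 in A, B.
    rewrite Rabs_left1 by lra. lra.
  - assert (A := Hr 0 t x z ltac:(lra) ltac:(lra) ltac:(apply Harea; apply Rabs_def2 in Hz; lra)).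
    assert (B := Hv 0 t x z ltac:(lra) ltac:(lra)).
    rewrite rvol_eq in A, B. rewrite Hz0, Hx0 in A, B.
    rewrite Rabs_pos_eq by lra. lra.
Qed.

Lemma ln_lt_half b : 0 < b -> ln (b / 4) < ln (b / 2).
Proof. intros. apply ln_increasing; lra. Qed.

Lemma Alg (Phi : R -> R -> R) (a1 a2 : R -> R) b1 b2 : 0 < b1 -> 0 < b2 ->
  (forall t2, 0 < t2 < b2 -> exists al, forall t1, 0 < t1 < b1 -> Phi t1 t2 = al + a1 t2 * ln t1) ->
  (forall t1, 0 < t1 < b1 -> exists be, forall t2, 0 < t2 < b2 -> Phi t1 t2 = be + a2 t1 * ln t2) ->
  exists R0 c1 c2 th, forall t1 t2, 0 < t1 < b1 -> 0 < t2 < b2 ->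
    Phi t1 t2 = R0 + c1 * (ln t1 - ln b1) + c2 * (ln t2 - ln b2) + th * (ln t1 - ln b1) * (ln t2 - ln b2)
    /\ a1 t2 = c1 + th * (ln t2 - ln b2) /\ a2 t1 = c2 + th * (ln t1 - ln b1).
Proof.
  intros Hb1 Hb2 HA HB.
  set (x0 := b1/2). set (x1 := b1/4). set (y0 := b2/2). set (y1 := b2/4).
  assert (A : forall t1 t2, 0 < t1 < b1 -> 0 < t2 < b2 -> Phi t1 t2 = Phi x0 t2 + a1 t2 * (ln t1 - ln x0)).
  { intros t1 t2 H1 H2. destruct (HA t2 H2) as [al Hal].
    rewrite (Hal t1 H1), (Hal x0 ltac:(unfold x0; lra)). ring. }
  assert (B : forall t1 t2, 0 < t1 < b1 -> 0 < t2 < b2 -> Phi t1 t2 = Phi t1 y0 + a2 t1 * (ln t2 - ln y0)).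
  { intros t1 t2 H1 H2. destruct (HB t1 H1) as [be Hbe].
    rewrite (Hbe t2 H2), (Hbe y0 ltac:(unfold y0; lra)). ring. }
  assert (Hlx : ln x1 - ln x0 <> 0) by (pose proof (ln_lt_half b1 Hb1); unfold x0, x1; lra).
  assert (Hly : ln y1 - ln y0 <> 0) by (pose proof (ln_lt_half b2 Hb2); unfold y0, y1; lra).
  assert (Hx0 : 0 < x0 < b1) by (unfold x0; lra). assert (Hx1 : 0 < x1 < b1) by (unfold x1; lra).
  assert (Hy0 : 0 < y0 < b2) by (unfold y0; lra). assert (Hy1 : 0 < y1 < b2) by (unfold y1; lra).
  set (th := (a2 x1 - a2 x0) / (ln x1 - ln x0)).
  assert (Ha1 : forall t2, 0 < t2 < b2 -> a1 t2 = a1 y0 + th * (ln t2 - ln y0)).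
  { intros t2 H2.
    assert (E1 := A x1 t2 Hx1 H2). assert (E2 := A x1 y0 Hx1 Hy0).
    assert (E3 := B x1 t2 Hx1 H2). assert (E4 := B x0 t2 Hx0 H2).
    apply (Rmult_eq_reg_r (ln x1 - ln x0)); auto. unfold th.
    transitivity (Phi x1 t2 - Phi x0 t2); [lra|].
    transitivity (Phi x1 y0 - Phi x0 y0 + (a2 x1 - a2 x0) * (ln t2 - ln y0)); [lra|].
    replace (Phi x1 y0 - Phi x0 y0) with (a1 y0 * (ln x1 - ln x0)) by lra. field. auto. }
  set (k1 := ln b1 - ln x0). set (k2 := ln b2 - ln y0).
  set (c1 := a1 y0 + th * k2). set (c2 := a2 x0 + th * k1).
  set (R0 := Phi x0 y0 + a2 x0 * k2 + a1 y0 * k1 + th * k1 * k2).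
  assert (HPhi : forall t1 t2, 0 < t1 < b1 -> 0 < t2 < b2 ->
    Phi t1 t2 = R0 + c1 * (ln t1 - ln b1) + c2 * (ln t2 - ln b2) + th * (ln t1 - ln b1) * (ln t2 - ln b2)).
  { intros t1 t2 H1 H2. rewrite (A t1 t2 H1 H2), (B x0 t2 Hx0 H2), (Ha1 t2 H2).
    unfold R0, c1, c2, k1, k2. ring. }
  exists R0, c1, c2, th. intros t1 t2 H1 H2. split; [|split].
  - auto.
  - rewrite (Ha1 t2 H2). unfold c1, k2. ring.
  - assert (E1 := B t1 y1 H1 Hy1).
    rewrite (HPhi t1 y1 H1 Hy1), (HPhi t1 y0 H1 Hy0) in E1.
    apply (Rmult_eq_reg_r (ln y1 - ln y0)); auto.
    transitivity ((c2 + th * (ln t1 - ln b1)) * ((ln y1 - ln b2) - (ln y0 - ln b2))); [|ring].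
    lra.
Qed.

Lemma ln_bexp b v : 0 < b -> ln (b * exp v) - ln b = v.
Proof. intros. rewrite ln_mult, ln_exp; [ring|lra|apply exp_pos]. Qed.

Lemma bexp_range b v : 0 < b -> v < 0 -> 0 < b * exp v < b.
Proof.
  intros Hb Hv. split. apply Rmult_lt_0_compat; [lra|apply exp_pos].
  assert (exp v < 1) by (rewrite <- exp_0; apply exp_increasing; lra). nra.
Qed.

Lemma Pos1 (c th b : R) (a : R -> R) : 0 < b ->
  (forall t, 0 < t < b -> a t = c + th * (ln t - ln b)) -> (forall t, 0 < t < b -> 0 < a t) ->
  th <= 0 /\ 0 <= c.
Proof.
  intros Hb Ha Hp.
  assert (Hv : forall v, v < 0 -> 0 < c + th * v).
  { intros v Hv. pose proof (bexp_range b v Hb Hv) as Hr.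
    specialize (Hp _ Hr). rewrite Ha in Hp by auto. rewrite ln_bexp in Hp; auto. }
  assert (Hth : th <= 0).
  { destruct (Rle_or_lt th 0) as [|Hlt]; auto. exfalso.
    specialize (Hv (- (Rabs c + 1) / th) ltac:(apply Rdiv_neg_pos; [pose proof (Rabs_pos c)|]; lra)).
    replace (c + th * (- (Rabs c + 1) / th)) with (c - Rabs c - 1) in Hv by (field; lra).
    pose proof (Rle_abs c). lra. }
  split; auto.
  destruct (Rle_or_lt 0 c) as [|Hlt]; auto. exfalso.
  specialize (Hv (c / (2 * (1 - th))) ltac:(apply Rdiv_neg_pos; lra)).
  replace (c + th * (c / (2 * (1 - th)))) with (c * ((2 - th) / (2 * (1 - th)))) in Hv by (field; lra).
  assert (0 < (2 - th) / (2 * (1 - th))) by (apply Rdiv_lt_0_compat; lra).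
  nra.
Qed.

Lemma Marg (f : R -> R) b k : 0 < b ->
  (forall t, 0 < t < b -> f t = exp (k * (ln t - ln b))) -> (forall t, 0 < t < b -> f t < 1/2) -> False.
Proof.
  intros Hb Hf Hh.
  assert (Hl2 : 0 < ln 2) by (rewrite <- ln_1; apply ln_increasing; lra).
  set (s := ln 2 / (Rabs k + 1)).
  assert (Hs : 0 < s) by (apply Rdiv_lt_0_compat; [lra|pose proof (Rabs_pos k); lra]).
  pose proof (bexp_range b (-s) Hb ltac:(lra)) as Hr.
  specialize (Hh _ Hr). rewrite Hf in Hh by auto. rewrite ln_bexp in Hh by auto.
  assert (Hks : Rabs k * s < ln 2).
  { unfold s. apply (Rmult_lt_reg_r (Rabs k + 1)); [pose proof (Rabs_pos k); lra|].
    replace (Rabs k * (ln 2 / (Rabs k + 1)) * (Rabs k + 1)) with (Rabs k * ln 2) by (field; pose proof (Rabs_pos k); lra).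
    pose proof (Rabs_pos k). nra. }
  assert (- ln 2 < k * - s).
  { pose proof (Rle_abs k). nra. }
  assert (exp (- ln 2) < exp (k * - s)) by (apply exp_increasing; auto).
  rewrite exp_Ropp, exp_ln in H0 by lra. lra.
Qed.

Lemma Corner F b1 b2 : 0 < b1 -> 0 < b2 -> biv_cdf_on F b1 b2 -> biv_abs_cont F ->
  forall eps, 0 < eps -> exists sg, 0 < sg /\ forall s, 0 < s < sg ->
    1 - eps < F (b1 * exp (- s)) (b2 * exp (- s)) <= 1.
Proof.
  intros Hb1 Hb2 [Hv [H0 [_ H11]]] HAC eps Heps.
  destruct (AC_one F HAC (eps/2) ltac:(lra)) as [del [Hd Hr]].
  exists (del / (b1 * b2)). split; [apply Rdiv_lt_0_compat; nra|].
  intros s Hs.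
  assert (Hs2 : b1 * b2 * s < del).
  { destruct Hs as [_ Hs]. apply (Rmult_lt_compat_l (b1 * b2)) in Hs; [|nra].
    replace (b1 * b2 * (del / (b1 * b2))) with del in Hs by (field; lra). lra. }
  set (e := exp (- s)).
  assert (He : 1 - s <= e) by (unfold e; pose proof (exp_ineq1_le (-s)); lra).
  assert (He1 : 0 < e < 1) by (unfold e; split; [apply exp_pos|rewrite <- exp_0; apply exp_increasing; lra]).
  assert (P0 : 0 < b1 * b2) by nra.
  assert (P1 : b1 * b2 * (1 - e) < del).
  { apply Rle_lt_trans with (b1 * b2 * s); [apply Rmult_le_compat_l; lra|lra]. }
  assert (P2 : b1 * b2 * (1 - e) * e < del).
  { apply Rle_lt_trans with (b1 * b2 * (1 - e)); [|lra].
    assert (0 < b1 * b2 * (1 - e)) by nra. nra. }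
  set (t1 := b1 * e). set (t2 := b2 * e).
  assert (A1 := Hr t1 b1 0 b2 ltac:(unfold t1; nra) ltac:(lra) ltac:(unfold t1; replace ((b1 - b1 * e) * (b2 - 0)) with (b1 * b2 * (1 - e)) by ring; lra)).
  assert (A2 := Hr 0 t1 t2 b2 ltac:(unfold t1; nra) ltac:(unfold t2; nra) ltac:(unfold t1, t2; replace ((b1 * e - 0) * (b2 - b2 * e)) with (b1 * b2 * (1 - e) * e) by ring; lra)).
  assert (B1 := Hv t1 b1 0 b2 ltac:(unfold t1; nra) ltac:(lra)).
  assert (B2 := Hv 0 t1 t2 b2 ltac:(unfold t1; nra) ltac:(unfold t2; nra)).
  rewrite rvol_eq in A1, A2, B1, B2.
  rewrite (H0 b1 0), (H0 t1 0), (H0 0 b2), (H0 0 t2) in * by lra.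
  rewrite H11 in *. lra.
Qed.

Lemma R0lem (R0 c th : R) (f : R -> R) :
  (forall eps, 0 < eps -> exists sg, 0 < sg /\ forall s, 0 < s < sg -> 1 - eps < f s <= 1) ->
  (exists sg0, 0 < sg0 /\ forall s, 0 < s < sg0 -> f s = exp (R0 + c * s + th * s * s)) -> R0 = 0.
Proof.
  intros Hc [sg0 [Hsg0 Hf]]. apply small_eq. intros eta Heta.
  assert (Hee : exp (- (eta/2)) < 1) by (rewrite <- exp_0; apply exp_increasing; lra).
  destruct (Hc (1 - exp (- (eta/2))) ltac:(lra)) as [sg [Hsg Hs]].
  set (M := Rabs c + Rabs th + 1).
  assert (HM : 0 < M) by (unfold M; pose proof (Rabs_pos c); pose proof (Rabs_pos th); lra).
  set (s := Rmin (Rmin (sg/2) (sg0/2)) (Rmin 1 (eta / (2 * M)))).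
  assert (Hs1 : s <= sg/2 /\ s <= sg0/2 /\ s <= 1 /\ s <= eta / (2 * M)).
  { unfold s. split; [|split; [|split]].
    - eapply Rle_trans; [apply Rmin_l|apply Rmin_l].
    - eapply Rle_trans; [apply Rmin_l|apply Rmin_r].
    - eapply Rle_trans; [apply Rmin_r|apply Rmin_l].
    - eapply Rle_trans; [apply Rmin_r|apply Rmin_r]. }
  assert (Hs0 : 0 < s).
  { unfold s. repeat apply Rmin_pos; try lra. apply Rdiv_lt_0_compat; lra. }
  destruct Hs1 as [Ha [Hb [Hc1 Hd]]].
  specialize (Hs s ltac:(lra)). rewrite (Hf s ltac:(lra)) in Hs.
  assert (Hsm : M * s <= eta / 2).
  { apply Rle_trans with (M * (eta / (2 * M))); [apply Rmult_le_compat_l; lra|]. right; field; lra. }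
  assert (Hq : Rabs (c * s + th * s * s) <= M * s).
  { apply Rle_trans with (Rabs (c * s) + Rabs (th * s * s)); [apply Rabs_triang|].
    rewrite Rabs_mult, (Rabs_mult (th * s)), Rabs_mult, (Rabs_pos_eq s) by lra.
    unfold M. pose proof (Rabs_pos c); pose proof (Rabs_pos th).
    assert (Rabs th * s * s <= Rabs th * s * 1) by (apply Rmult_le_compat_l; nra). nra. }
  destruct Hs as [Hs1 Hs2].
  assert (U1 : R0 + c * s + th * s * s <= 0).
  { destruct (Rle_or_lt (R0 + c * s + th * s * s) 0); auto.
    assert (exp 0 < exp (R0 + c * s + th * s * s)) by (apply exp_increasing; auto). rewrite exp_0 in H0; lra. }
  assert (U2 : - (eta / 2) < R0 + c * s + th * s * s).
  { apply exp_lt_inv. lra. }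
  apply Rabs_le_between in Hq. apply Rabs_def1; lra.
Qed.

Lemma Lim (f q : R -> R) (D : R -> Prop) L x0 : continuous q x0 -> q x0 = L ->
  (forall t, D t -> f t = q t) -> limit1_in f D L x0.
Proof.
  intros Hc HL Hf. unfold limit1_in, limit_in. intros eps Heps.
  destruct (eps_of_cont q x0 Hc eps Heps) as [d [Hd Hz]].
  exists d. split; auto. intros x [Hx1 Hx2]. simpl in *. unfold R_dist in *.
  rewrite Hf by auto. rewrite <- HL. auto.
Qed.

Lemma Slice1 F b1 b2 cf1 cf2 : 0 < b1 -> 0 < b2 -> biv_cdf_on F b1 b2 -> biv_abs_cont F ->
  (forall t1 t2, 0 < t1 < b1 -> 0 < t2 < b2 -> 0 < F t1 t2) -> cdcpe_prop F b1 b2 cf1 cf2 ->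
  forall t2, 0 < t2 < b2 -> exists al, forall t1, 0 < t1 < b1 ->
    ln (F t1 t2) = al + cf1 t2 / (1 - cf1 t2) * ln t1.
Proof.
  intros Hb1 Hb2 Hcdf HAC Hpos [Hr1 [Hr2 Hp]] t2 Ht2.
  apply (L1 (fun x => F x t2) b1 (cf1 t2)); auto.
  - apply (Cont1 F b1 b2); auto; lra.
  - destruct Hcdf as [_ [H0 _]]. apply H0; lra.
  - intros t Ht. destruct (Hp t t2 Ht Ht2) as [E _]. unfold cdcpe1, mit1 in E. exact E.
Qed.

Lemma Slice2 F b1 b2 cf1 cf2 : 0 < b1 -> 0 < b2 -> biv_cdf_on F b1 b2 -> biv_abs_cont F ->
  (forall t1 t2, 0 < t1 < b1 -> 0 < t2 < b2 -> 0 < F t1 t2) -> cdcpe_prop F b1 b2 cf1 cf2 ->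
  forall t1, 0 < t1 < b1 -> exists be, forall t2, 0 < t2 < b2 ->
    ln (F t1 t2) = be + cf2 t1 / (1 - cf2 t1) * ln t2.
Proof.
  intros Hb1 Hb2 Hcdf HAC Hpos [Hr1 [Hr2 Hp]] t1 Ht1.
  apply (L1 (fun y => F t1 y) b2 (cf2 t1)); auto.
  - apply (Cont2 F b1 b2); auto; lra.
  - destruct Hcdf as [_ [H0 _]]. apply H0; lra.
  - intros t Ht. destruct (Hp t1 t Ht1 Ht) as [_ E]. unfold cdcpe2, mit2 in E. exact E.
Qed.

Lemma ln_ratio_neg t b : 0 < t < b -> ln (t / b) < 0.
Proof. intros H. rewrite ln_div by lra. pose proof (ln_increasing t b ltac:(lra) ltac:(lra)). lra. Qed.

Lemma PowId F b1 b2 th c1 c2 : 0 < b1 -> 0 < b2 -> biv_cdf_on F b1 b2 -> biv_abs_cont F ->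
  biv_power F b1 b2 th c1 c2 -> forall t1 t2, 0 < t1 < b1 -> 0 < t2 < b2 ->
  (0 < c1 + th * ln (t2 / b2) /\ 0 < mit1 F t1 t2 /\
   cdcpe1 F t1 t2 = (c1 + th * ln (t2 / b2)) / (c1 + th * ln (t2 / b2) + 1) * mit1 F t1 t2) /\
  (0 < c2 + th * ln (t1 / b1) /\ 0 < mit2 F t1 t2 /\
   cdcpe2 F t1 t2 = (c2 + th * ln (t1 / b1)) / (c2 + th * ln (t1 / b1) + 1) * mit2 F t1 t2).
Proof.
  intros Hb1 Hb2 Hcdf HAC [Hth [Hc1 [Hc2 HF]]] t1 t2 Ht1 Ht2.
  assert (Hl1 := ln_ratio_neg t1 b1 Ht1). assert (Hl2 := ln_ratio_neg t2 b2 Ht2).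
  destruct Hcdf as [Hv [H0 Hrest]].
  split.
  - assert (Ha : 0 < c1 + th * ln (t2 / b2)) by nra.
    assert (HL := L3 (fun x => F x t2) b1 (c2 * ln (t2 / b2) - c1 * ln b1 - th * ln (t2 / b2) * ln b1) (c1 + th * ln (t2 / b2)) t1 Ha).
    destruct HL as [A B].
    + apply (Cont1 F b1 b2); auto. split; auto. lra.
    + apply H0; lra.
    + intros x Hx. rewrite HF by auto. unfold Rpower. rewrite (ln_div x b1) by lra. rewrite <- exp_plus.
      f_equal. ring.
    + exact Ht1.
    + unfold cdcpe1, mit1. split; [exact Ha|split; [exact A|exact B]].
  - assert (Ha : 0 < c2 + th * ln (t1 / b1)) by nra.
    assert (HL := L3 (fun y => F t1 y) b2 (c1 * ln (t1 / b1) - c2 * ln b2 - th * ln (t1 / b1) * ln b2) (c2 + th * ln (t1 / b1)) t2 Ha).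
    destruct HL as [A B].
    + apply (Cont2 F b1 b2); auto. split; auto. lra.
    + apply H0; lra.
    + intros y Hy. rewrite HF by auto. unfold Rpower. rewrite (ln_div y b2) by lra. rewrite <- exp_plus.
      f_equal. ring.
    + exact Ht2.
    + unfold cdcpe2, mit2. split; [exact Ha|split; [exact A|exact B]].
Qed.

Lemma frac_lt1 a : 0 < a -> a / (a + 1) < 1.
Proof. intros. apply (Rmult_lt_reg_r (a+1)); [lra|]. replace (a / (a + 1) * (a + 1)) with a by (field; lra). lra. Qed.

Lemma Fwd F b1 b2 cf1 cf2 : 0 < b1 -> 0 < b2 -> biv_cdf_on F b1 b2 -> biv_abs_cont F ->
  (forall t1 t2, 0 < t1 < b1 -> 0 < t2 < b2 -> 0 < F t1 t2) -> cdcpe_prop F b1 b2 cf1 cf2 ->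
  exists theta c1 c2 : R, biv_power F b1 b2 theta c1 c2.
Proof.
  intros Hb1 Hb2 Hcdf HAC Hpos Hp.
  assert (S1 := Slice1 F b1 b2 cf1 cf2 Hb1 Hb2 Hcdf HAC Hpos Hp).
  assert (S2 := Slice2 F b1 b2 cf1 cf2 Hb1 Hb2 Hcdf HAC Hpos Hp).
  destruct (Alg (fun t1 t2 => ln (F t1 t2)) (fun t => cf1 t / (1 - cf1 t)) (fun t => cf2 t / (1 - cf2 t)) b1 b2 Hb1 Hb2 S1 S2)
    as [R0 [c1 [c2 [th HA]]]].
  destruct Hp as [Hr1 [Hr2 _]].
  assert (Hb1h : 0 < b1/2 < b1) by lra. assert (Hb2h : 0 < b2/2 < b2) by lra.
  assert (P1 : th <= 0 /\ 0 <= c1).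
  { apply (Pos1 c1 th b2 (fun t => cf1 t / (1 - cf1 t)) Hb2).
    - intros t Ht. apply (HA (b1/2) t Hb1h Ht).
    - intros t Ht. specialize (Hr1 t Ht). apply Rdiv_lt_0_compat; lra. }
  assert (P2 : th <= 0 /\ 0 <= c2).
  { apply (Pos1 c2 th b1 (fun t => cf2 t / (1 - cf2 t)) Hb1).
    - intros t Ht. apply (HA t (b2/2) Ht Hb2h).
    - intros t Ht. specialize (Hr2 t Ht). apply Rdiv_lt_0_compat; lra. }
  assert (HF : forall t1 t2, 0 < t1 < b1 -> 0 < t2 < b2 ->
     F t1 t2 = exp (R0 + c1 * (ln t1 - ln b1) + c2 * (ln t2 - ln b2) + th * (ln t1 - ln b1) * (ln t2 - ln b2))).
  { intros t1 t2 H1 H2. destruct (HA t1 t2 H1 H2) as [E _]. rewrite <- E. rewrite exp_ln; auto. }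
  assert (HR : R0 = 0).
  { apply (R0lem R0 (- (c1 + c2)) th (fun s => F (b1 * exp (- s)) (b2 * exp (- s)))).
    - apply Corner; auto.
    - exists 1. split; [lra|]. intros s Hs.
      rewrite HF by (apply bexp_range; lra).
      rewrite !ln_bexp by lra. f_equal. ring. }
  subst R0.
  destruct Hcdf as [Hv [H0 [_ H11]]].
  assert (Hc1 : 0 < c1).
  { destruct P1 as [_ [Hlt|Heq]]; auto. exfalso. subst c1.
    destruct (AC_one F HAC (1/2) ltac:(lra)) as [del [Hd Hr]].
    set (t1 := Rmin (b1/2) (del / (2 * b2))).
    assert (Ht1 : 0 < t1 < b1).
    { unfold t1. split. apply Rmin_pos; [lra|apply Rdiv_lt_0_compat; lra].
      pose proof (Rmin_l (b1/2) (del / (2 * b2))). lra. }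
    assert (Ht1' : t1 * b2 < del).
    { assert (t1 <= del / (2 * b2)) by (unfold t1; apply Rmin_r).
      apply Rle_lt_trans with (del / (2 * b2) * b2); [apply Rmult_le_compat_r; lra|].
      replace (del / (2 * b2) * b2) with (del / 2) by (field; lra). lra. }
    assert (Hm : F t1 b2 < 1/2).
    { specialize (Hr 0 t1 0 b2 ltac:(lra) ltac:(lra) ltac:(lra)). rewrite rvol_eq in Hr.
      rewrite (H0 0 b2), (H0 t1 0), (H0 0 0) in Hr by lra. lra. }
    apply (Marg (fun t2 => F t1 t2) b2 (c2 + th * (ln t1 - ln b1)) Hb2).
    - intros t Ht. rewrite HF by auto. f_equal. ring.
    - intros t Ht. specialize (Hv 0 t1 t b2 ltac:(lra) ltac:(lra)). rewrite rvol_eq in Hv.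
      rewrite (H0 0 b2), (H0 0 t) in Hv by lra. lra. }
  assert (Hc2 : 0 < c2).
  { destruct P2 as [_ [Hlt|Heq]]; auto. exfalso. subst c2.
    destruct (AC_one F HAC (1/2) ltac:(lra)) as [del [Hd Hr]].
    set (t2 := Rmin (b2/2) (del / (2 * b1))).
    assert (Ht2 : 0 < t2 < b2).
    { unfold t2. split. apply Rmin_pos; [lra|apply Rdiv_lt_0_compat; lra].
      pose proof (Rmin_l (b2/2) (del / (2 * b1))). lra. }
    assert (Ht2' : (b1 - 0) * (t2 - 0) < del).
    { assert (t2 <= del / (2 * b1)) by (unfold t2; apply Rmin_r).
      apply Rle_lt_trans with (b1 * (del / (2 * b1))); [rewrite !Rminus_0_r; apply Rmult_le_compat_l; lra|].
      replace (b1 * (del / (2 * b1))) with (del / 2) by (field; lra). lra. }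
    assert (Hm : F b1 t2 < 1/2).
    { specialize (Hr 0 b1 0 t2 ltac:(lra) ltac:(lra) Ht2'). rewrite rvol_eq in Hr.
      rewrite (H0 0 t2), (H0 b1 0), (H0 0 0) in Hr by lra. lra. }
    apply (Marg (fun t1 => F t1 t2) b1 (c1 + th * (ln t2 - ln b2)) Hb1).
    - intros t Ht. rewrite HF by auto. f_equal. ring.
    - intros t Ht. specialize (Hv t b1 0 t2 ltac:(lra) ltac:(lra)). rewrite rvol_eq in Hv.
      rewrite (H0 b1 0), (H0 t 0) in Hv by lra. lra. }
  exists th, c1, c2. split; [tauto|split; [auto|split; [auto|]]].
  intros t1 t2 H1 H2. rewrite HF by auto. unfold Rpower.
  rewrite (ln_div t1 b1), (ln_div t2 b2) by lra. rewrite <- exp_plus. f_equal. ring.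
Qed.

Theorem mainTheorem16 (b1 b2 : R) (F : R -> R -> R) :
  0 < b1 -> 0 < b2 ->
  biv_cdf_on F b1 b2 ->
  biv_abs_cont F ->
  (forall t1 t2, 0 < t1 < b1 -> 0 < t2 < b2 -> 0 < F t1 t2) ->
  ((exists cf1 cf2 : R -> R, cdcpe_prop F b1 b2 cf1 cf2) <->
   (exists theta c1 c2 : R, biv_power F b1 b2 theta c1 c2)) /\
  (forall (cf1 cf2 : R -> R) (theta c1 c2 : R),
     cdcpe_prop F b1 b2 cf1 cf2 -> biv_power F b1 b2 theta c1 c2 ->
     (exists L1, limit1_in cf1 (fun t => 0 < t < b2) L1 b2 /\ L1 <> 1 /\
                 c1 = L1 / (1 - L1)) /\
     (exists L2, limit1_in cf2 (fun t => 0 < t < b1) L2 b1 /\ L2 <> 1 /\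
                 c2 = L2 / (1 - L2))).
Proof.
  intros Hb1 Hb2 Hcdf HAC Hpos. split; [split|].
  - intros [cf1 [cf2 Hp]]. eapply Fwd; eauto.
  - intros [th [c1 [c2 Hpow]]].
    assert (PI := PowId F b1 b2 th c1 c2 Hb1 Hb2 Hcdf HAC Hpow).
    exists (fun t => (c1 + th * ln (t / b2)) / (c1 + th * ln (t / b2) + 1)).
    exists (fun t => (c2 + th * ln (t / b1)) / (c2 + th * ln (t / b1) + 1)).
    split; [|split].
    + intros t Ht. destruct (PI (b1/2) t ltac:(lra) Ht) as [[A _] _].
      split; [apply Rdiv_lt_0_compat; lra|]. apply frac_lt1; lra.
    + intros t Ht. destruct (PI t (b2/2) Ht ltac:(lra)) as [_ [A _]].
      split; [apply Rdiv_lt_0_compat; lra|]. apply frac_lt1; lra.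
    + intros t1 t2 H1 H2. destruct (PI t1 t2 H1 H2) as [[_ [_ A]] [_ [_ B]]]. auto.
  - intros cf1 cf2 th c1 c2 Hp Hpow.
    assert (PI := PowId F b1 b2 th c1 c2 Hb1 Hb2 Hcdf HAC Hpow).
    destruct Hp as [_ [_ Hp]].
    destruct Hpow as [Hth [Hc1 [Hc2 _]]].
    split.
    + exists (c1 / (c1 + 1)). split; [|split].
      * apply (Lim cf1 (fun t => (c1 + th * ln (t / b2)) / (c1 + th * ln (t / b2) + 1))).
        -- apply (@ex_derive_continuous R_AbsRing R_NormedModule). auto_derive.
           replace (b2 * / b2) with 1 by (field; lra). rewrite ln_1.
           repeat split; try lra.
        -- replace (b2 / b2) with 1 by (field; lra). rewrite ln_1. f_equal; ring.
        -- intros t Ht. destruct (PI (b1/2) t ltac:(lra) Ht) as [[A [M E]] _].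
           destruct (Hp (b1/2) t ltac:(lra) Ht) as [E' _].
           apply (Rmult_eq_reg_r (mit1 F (b1/2) t)); [|lra]. rewrite <- E', E. reflexivity.
      * intros Heq. apply (Rmult_eq_compat_r (c1 + 1)) in Heq.
        replace (c1 / (c1 + 1) * (c1 + 1)) with c1 in Heq by (field; lra). lra.
      * replace (1 - c1 / (c1 + 1)) with (1 / (c1 + 1)) by (field; lra). field. lra.
    + exists (c2 / (c2 + 1)). split; [|split].
      * apply (Lim cf2 (fun t => (c2 + th * ln (t / b1)) / (c2 + th * ln (t / b1) + 1))).
        -- apply (@ex_derive_continuous R_AbsRing R_NormedModule). auto_derive.
           replace (b1 * / b1) with 1 by (field; lra). rewrite ln_1.
           repeat split; try lra.
        -- replace (b1 / b1) with 1 by (field; lra). rewrite ln_1. f_equal; ring.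
        -- intros t Ht. destruct (PI t (b2/2) Ht ltac:(lra)) as [_ [A [M E]]].
           destruct (Hp t (b2/2) Ht ltac:(lra)) as [_ E'].
           apply (Rmult_eq_reg_r (mit2 F t (b2/2))); [|lra]. rewrite <- E', E. reflexivity.
      * intros Heq. apply (Rmult_eq_compat_r (c2 + 1)) in Heq.
        replace (c2 / (c2 + 1) * (c2 + 1)) with c2 in Heq by (field; lra). lra.
      * replace (1 - c2 / (c2 + 1)) with (1 / (c2 + 1)) by (field; lra). field. lra.
Qed.
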